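(* Let $k\ge 2$ be an integer and let $d_1\ge d_2\ge\cdots\ge d_k\ge 2$ be integers. If $r\le d_1+k-2$, then for all sufficiently large $n$, $$ex\Big(n,K_r,\bigcup_{i=1}^k S_{d_i}\Big)\le \max\left\{\max_{1\le i\le k}\left\{\Big(\binom{d_i+i-1}{r}-\binom{i-1}{r}\Big)\Big\lceil\frac{n-i+1}{d_i}\Big\rceil+\binom{i-1}{r},\ \frac{d_i-1}{r-i+1}(n-i+1)\right\},\ \max_{1\le c<k-1}\left\{\frac{\max\big\{\binom{d_c+c}{r-1},\,d_c+c\big\}}{r-c}(n-c)\right\}\right\}.$$
   Context: $S_\ell$ denotes the star $K_{1,\ell}$ with $\ell$ edges, and $\bigcup_{i=1}^k S_{d_i}$ denotes the star forest that is the vertex-disjoint union of $S_{d_1},\dots,S_{d_k}$. For graphs $H$ and $F$, the generalized Turán number $ex(n,H,F)$ is the maximum number of copies of $H$ in an $n$-vertex graph containing no copy of $F$ as a subgraph; $K_r$ is the complete graph on $r$ vertices. Binomial coefficients $\binom{a}{b}$ with $a<b$ are $0$. *)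

(* Defs.v *)
From HB Require Import structures.
From mathcomp Require Import all_boot all_order all_algebra.
Set Implicit Arguments. Unset Strict Implicit. Unset Printing Implicit Defensive.
Import Order.TTheory GRing.Theory Num.Theory.

Definition simple_graph (n : nat) (g : {ffun 'I_n * 'I_n -> bool}) : bool :=
  [forall x, ~~ g (x, x)] && [forall x, forall y, g (x, y) == g (y, x)].

Definition contains_copy (n : nat) (g : {ffun 'I_n * 'I_n -> bool})
  (W : finType) (F : rel W) : bool :=
  [exists f : {ffun W -> 'I_n},
     injectiveb f && [forall x, forall y, F x y ==> g (f x, f y)]].

Definition num_Kr (n : nat) (g : {ffun 'I_n * 'I_n -> bool}) (r : nat) : nat :=
  #|[set S : {set 'I_n} | (#|S| == r) &&
       [forall x in S, forall y in S, (x != y) ==> g (x, y)]]|.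

Definition ex_Kr (n r : nat) (W : finType) (F : rel W) : nat :=
  \max_(g : {ffun 'I_n * 'I_n -> bool} | simple_graph g && ~~ contains_copy g F)
     num_Kr g r.

(* The star forest S_{d 1} u ... u S_{d k}: star number i (i : 'I_k stands
   for the star index i+1) has vertices 0 (the centre) and 1..d(i+1)
   (the leaves). *)
Definition sf_vertex (k : nat) (d : nat -> nat) : finType :=
  {i : 'I_k & 'I_(d i.+1).+1}.

Definition star_forest (k : nat) (d : nat -> nat) : rel (sf_vertex k d) :=
  fun u v => (tag u == tag v) &&
             ((val (tagged u) == 0%N) != (val (tagged v) == 0%N)).

(* Main.v *)
Require Import Defs.
From HB Require Import structures.
From mathcomp Require Import all_boot all_order all_algebra.
From mathcomp Require Import zify ring lra.
From Stdlib Require Import Classical.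
Import Order.TTheory GRing.Theory Num.Theory.
Set Implicit Arguments. Unset Strict Implicit. Unset Printing Implicit Defensive.

Lemma predlt m D : m != 0 -> m < D.+1 -> m.-1 < D. Proof. by case: m. Qed.
Lemma predinj m m' : m != 0 -> m' != 0 -> m.-1 = m'.-1 -> m = m'.
Proof. by case: m => // m; case: m' => // m' _ _ /= ->. Qed.

Lemma count_lt (T : eqType) (p q : pred T) s x :
  (forall y, p y -> q y) -> x \in s -> q x -> ~~ p x -> count p s < count q s.
Proof.
move=> pq; elim: s => // a s IH; rewrite inE => /orP [/eqP <-|xs] qx npx /=.
  by rewrite qx (negbTE npx) add0n add1n ltnS; apply: sub_count.
have h : p a <= q a by case: (p a) (pq a) => // ->.
by rewrite -addnS; apply: leq_add => //; exact: IH.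
Qed.

Lemma sum_ind (T : finType) (A : {set T}) (P : pred T) :
  \sum_(x in A) (P x : nat) = #|[set x in A | P x]|.
Proof.
rewrite -sum1_card [RHS]big_mkcond [LHS]big_mkcond /=; apply: eq_bigr => x _.
by rewrite !inE; case: (x \in A); case: (P x).
Qed.

Lemma maxP (P : nat -> Prop) a b : P a -> ~ P b -> a < b ->
  exists j, a <= j < b /\ P j /\ ~ P j.+1.
Proof.
move=> Pa; elim: b => // b IH nPb; rewrite ltnS leq_eqVlt => /orP [/eqP ab | ab].
  by subst b; exists a; split; [rewrite leqnn ltnSn | split].
case: (classic (P b)) => Pb.
  by exists b; split; [rewrite (ltnW ab) ltnSn | split].
have [j [/andP [aj jb] [Pj nPj]]] := IH Pb ab.
by exists j; split; [rewrite aj (ltn_trans jb (ltnSn b)) | split].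
Qed.

Lemma sum_sub (F : nat -> nat) m1 m2 m3 m4 : m1 <= m2 -> m2 <= m3 -> m3 <= m4 ->
  \sum_(m2 <= i < m3) F i <= \sum_(m1 <= i < m4) F i.
Proof.
move=> h1 h2 h3; rewrite (@big_cat_nat _ _ _ m2 m1 m4) //=; last exact: leq_trans h2 h3.
rewrite (@big_cat_nat _ _ _ m3 m2 m4) //=.
exact: leq_trans (leq_addr _ _) (leq_addl _ _).
Qed.

Section Graph.
Variables (n : nat) (g : {ffun 'I_n * 'I_n -> bool}).
Hypothesis gs : simple_graph g.

Definition Nb (v : 'I_n) := [set u | g (v, u)].

Lemma g_sym x y : g (x,y) = g (y,x).
Proof. by case/andP: gs => _ /forallP /(_ x) /forallP /(_ y) /eqP. Qed.
Lemma g_irr x : g (x,x) = false.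
Proof. by case/andP: gs => /forallP /(_ x) /negbTE. Qed.

Variables (k : nat) (d : nat -> nat).

Lemma embed (cen : nat -> 'I_n) (lv : nat -> {set 'I_n}) :
  (forall t t', 0 < t <= k -> 0 < t' <= k -> cen t = cen t' -> t = t') ->
  (forall t t', 0 < t <= k -> 0 < t' <= k -> cen t \notin lv t') ->
  (forall t t', 0 < t <= k -> 0 < t' <= k -> t != t' -> [disjoint lv t & lv t']) ->
  (forall t, 0 < t <= k -> lv t \subset Nb (cen t) /\ #|lv t| = d t) ->
  contains_copy g (@star_forest k d).
Proof.
move=> Hc Hcl Hd Hl.
pose f (u : sf_vertex k d) : 'I_n :=
  if val (tagged u) == 0 then cen (tag u).+1
  else nth (cen (tag u).+1) (enum (lv (tag u).+1)) (val (tagged u)).-1.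
have rng (u : sf_vertex k d) : 0 < (tag u).+1 <= k by rewrite /= ltn_ord.
have leafin (u : sf_vertex k d) : val (tagged u) != 0 -> f u \in lv (tag u).+1.
  move=> nz; rewrite /f (negbTE nz) -mem_enum; apply: mem_nth.
  rewrite -cardE; have [_ ->] := Hl _ (rng u).
  move: nz; case: (tagged u) => m Hm /= nz; move: nz Hm; rewrite -lt0n; case: m => // m _; rewrite ltnS; exact.
rewrite /contains_copy;   apply/existsP; exists (finfun f : {ffun sf_vertex k d -> 'I_n}); apply/andP; split.
  apply/injectiveP => u v; rewrite !ffunE.
  case: u v => [i l] [i' l'] /=.
  have ri := rng (existT _ i l : sf_vertex k d); have ri' := rng (existT _ i' l' : sf_vertex k d).
  have li := leafin (existT _ i l : sf_vertex k d); have li' := leafin (existT _ i' l' : sf_vertex k d).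
  simpl in li, li'.
  rewrite /f /=.
  case: eqP => [l0|/eqP ln0]; case: eqP => [l0'|/eqP ln0'].
  - move=> /Hc - /(_ ri ri') [] /val_inj ei; subst i'.
    by congr existT; apply: val_inj; move: l0 l0'; rewrite /= => -> ->.
  - move=> E; have := li' ln0'; rewrite /f /= (negbTE ln0') -E.
    by rewrite (negbTE (Hcl _ _ ri ri')).
  - move=> E; have := li ln0; rewrite /f /= (negbTE ln0) E.
    by rewrite (negbTE (Hcl _ _ ri' ri)).
  - move=> E.
    have := li ln0; have := li' ln0'; rewrite /f /= (negbTE ln0) (negbTE ln0') E.
    case: (eqVneq i i') => [ei|ne].
      subst i'; move=> _ _; congr Tagged; apply: val_inj.
      move: E; set s := enum _.
      have us : uniq s by apply: enum_uniq.
      have [_ szl] := Hl _ ri.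
      have sz : size s = d i.+1 by rewrite /s -cardE.
      move/eqP; rewrite nth_uniq ?sz ?predlt //.
      by move/eqP/(predinj ln0 ln0').
    move=> a b.
    have ne' : i.+1 != i'.+1 by rewrite eqSS; apply: contra ne => /eqP/val_inj ->.
    by rewrite (disjointFr (Hd _ _ ri ri' ne') b) in a.
apply/forallP => u; apply/forallP => v; apply/implyP.
rewrite !ffunE; case: u => i l; case: v => i' l' /=.
case/andP => /eqP /= ei; subst i' => hx.
have ri := rng (existT _ i l : sf_vertex k d).
have [sub _] := Hl _ ri.
move: hx; rewrite /f /=.
case E1: (val l == 0); case E2: (val l' == 0) => //= _.
  have ln0' : val l' != 0 by rewrite E2.
  by have := leafin (existT _ i l' : sf_vertex k d) ln0'; rewrite /f /= E2 => /(subsetP sub); rewrite inE.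
have ln0 : val l != 0 by rewrite E1.
by have := leafin (existT _ i l : sf_vertex k d) ln0; rewrite /f /= E1 => /(subsetP sub); rewrite inE g_sym.
Qed.

Definition sumd := \sum_(1 <= t < k.+1) d t.

Lemma d_le_sumd t : 0 < t <= k -> d t <= sumd.
Proof.
case/andP=> t0 tk; rewrite /sumd (@big_cat_nat _ _ _ t); last first.
- by apply: leq_trans tk _.
- by [].
rewrite (@big_ltn _ _ _ t) ?ltnS //.
exact: leq_trans (leq_addr _ (d t)) (leq_addl _ _).
Qed.

Lemma card_bigcup_le (T : finType) (I : Type) (r : seq I) (P : pred I) (F : I -> {set T}) :
  #|\bigcup_(i <- r | P i) F i| <= \sum_(i <- r | P i) #|F i|.
Proof.
apply: (big_ind2 (fun (A : {set T}) m => (#|A| <= m : Prop))); first by rewrite cards0.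
  by move=> A1 m1 A2 m2 h1 h2; apply: leq_trans (leq_card_setU _ _).1 (leq_add h1 h2).
by [].
Qed.

Lemma mem_bigcup_seq (I : eqType) (r : seq I) (P : pred I) (F : I -> {set 'I_n}) i x :
  i \in r -> P i -> x \in F i -> x \in \bigcup_(j <- r | P j) F j.
Proof.
elim: r => // a r IH; rewrite inE big_cons => /orP [/eqP <-|ir] Pi xF.
  by rewrite Pi inE xF.
by case: ifP => _; [rewrite inE IH ?orbT // | exact: IH].
Qed.

Lemma exists_sub (A : {set 'I_n}) m : m <= #|A| -> exists2 B : {set 'I_n}, B \subset A & #|B| = m.
Proof.
move=> le; have : 0 < #|[set B : {set 'I_n} | B \subset A & #|B| == m]|.
  by rewrite cards_draws bin_gt0.
by case/card_gt0P => B; rewrite inE => /andP [h /eqP e]; exists B.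
Qed.

Definition Good (gd : pred nat) (cen : nat -> 'I_n) (lv : nat -> {set 'I_n}) : Prop :=
  (forall t t', 0 < t <= k -> 0 < t' <= k -> gd t' -> cen t \notin lv t') /\
  (forall t t', 0 < t <= k -> 0 < t' <= k -> gd t -> gd t' -> t != t' -> [disjoint lv t & lv t']) /\
  (forall t, 0 < t <= k -> gd t -> lv t \subset Nb (cen t) /\ #|lv t| = d t).


Lemma fill (cen : nat -> 'I_n) : 
  (forall t t', 0 < t <= k -> 0 < t' <= k -> cen t = cen t' -> t = t') ->
  forall gd lv, 
  (forall t, 0 < t <= k -> ~~ gd t -> sumd + k + d t <= #|Nb (cen t)|) ->
  Good gd cen lv -> exists lv', Good predT cen lv'.
Proof.
move=> Hc gd lv.
move: {2}(count (predC gd) (iota 1 k)) (leqnn (count (predC gd) (iota 1 k))) => m.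
elim: m gd lv => [|m IH] gd lv cnt Hdeg [G1 [G2 G3]].
  have allg t : 0 < t <= k -> gd t.
    move=> rt; apply: contraT => ngd.
    have : 0 < count (predC gd) (iota 1 k).
      rewrite -has_count; apply/hasP; exists t => //; rewrite mem_iota.
      by case/andP: rt => a b; rewrite a /= add1n ltnS.
    by rewrite lt0n -leqn0 cnt.
  exists lv; split; [|split].
  - by move=> t t' rt rt' _; apply: G1 => //; apply: allg.
  - by move=> t t' rt rt' _ _; apply: G2 => //; apply: allg.
  - by move=> t rt _; apply: G3 => //; apply: allg.
have [/hasP [t0 t0in /= ngd0]| nh] := boolP (has (predC gd) (iota 1 k)); last first.
  exists lv; split; [|split].
  - move=> t t' rt rt' _; apply: G1 => //; apply: contraR nh => ngd.
    by apply/hasP; exists t' => //; rewrite mem_iota; case/andP: rt' => a b; rewrite a /= add1n ltnS.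
  - move=> t t' rt rt' _ _; apply: G2 => //; apply: contraR nh => ngd.
      by apply/hasP; exists t => //; rewrite mem_iota; case/andP: rt => a b; rewrite a /= add1n ltnS.
    by apply/hasP; exists t' => //; rewrite mem_iota; case/andP: rt' => a b; rewrite a /= add1n ltnS.
  - move=> t rt _; apply: G3 => //; apply: contraR nh => ngd.
    by apply/hasP; exists t => //; rewrite mem_iota; case/andP: rt => a b; rewrite a /= add1n ltnS.
have rt0 : 0 < t0 <= k by move: t0in; rewrite mem_iota add1n ltnS.
pose Cs := \bigcup_(t <- iota 1 k) [set cen t].
pose U := \bigcup_(t <- iota 1 k | gd t) lv t.
have cCs : #|Cs| <= k.
  apply: leq_trans (card_bigcup_le _ _ _) _.
  under eq_bigr do rewrite cards1.
  by rewrite sum1_size size_iota.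
have cU : #|U| <= sumd.
  apply: leq_trans (card_bigcup_le _ _ _) _.
  rewrite /sumd /index_iota subSS subn0 [X in _ <= X](bigID gd) /=.
  apply: leq_trans (leq_addr _ _).
  rewrite big_seq_cond [X in _ <= X]big_seq_cond; apply: leq_sum => t /andP [tin gt].
  move: tin; rewrite mem_iota add1n ltnS => rt.
  by case: (G3 t rt gt) => _ ->.
have big : d t0 <= #|Nb (cen t0) :\: (Cs :|: U)|.
  have h1 := Hdeg _ rt0 ngd0.
  have h2 := (leq_card_setU Cs U).1.
  have h3 : #|Nb (cen t0)| <= #|Nb (cen t0) :\: (Cs :|: U)| + #|Cs :|: U|.
    by rewrite -(cardsID (Cs :|: U) (Nb (cen t0))) addnC leq_add2l subset_leq_card // subsetIr.
  rewrite -(leq_add2r #|Cs :|: U|); apply: leq_trans h3.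
  apply: leq_trans h1; rewrite addnC leq_add2r; apply: leq_trans h2 _.
  by rewrite addnC leq_add.
have [A sA cA] := exists_sub big.
pose lv' := fun t => if t == t0 then A else lv t.
have sA' : A \subset Nb (cen t0) by apply: subset_trans sA (subsetDl _ _).
have AnC t : 0 < t <= k -> cen t \notin A.
  move=> rt; apply/negP => /(subsetP sA); rewrite !inE negb_or => /andP [/andP [nC _] _].
  apply: (negP nC); apply: (mem_bigcup_seq (i := t)); rewrite ?set11 //.
  by rewrite mem_iota add1n ltnS.
have AnU t : 0 < t <= k -> gd t -> [disjoint A & lv t].
  move=> rt gt; rewrite disjoint_subset; apply/subsetP => x /(subsetP sA).
  rewrite !inE negb_or => /andP [/andP [_ nU] _]; apply: contra nU => xl.
  by apply: (mem_bigcup_seq (i := t)); rewrite // mem_iota add1n ltnS.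
have HG : Good (predU gd (pred1 t0)) cen lv'.
  split; [|split].
  + move=> t t' rt rt'; rewrite /lv' !inE.
    case: (eqVneq t' t0) => [->|ne]; rewrite ?orbT ?orbF => gt'.
      exact: (AnC _ rt).
    by apply: G1.
  + move=> t t' rt rt'; rewrite /lv' !inE.
    case: (eqVneq t t0) => [->|ne]; case: (eqVneq t' t0) => [->|ne']; rewrite ?orbT ?orbF => gt gt' tt'.
    * by [].
    * exact: AnU.
    * by rewrite disjoint_sym; apply: AnU.
    * by apply: G2.
  + move=> t rt; rewrite /lv' !inE.
    case: (eqVneq t t0) => [->|ne]; rewrite ?orbT ?orbF => gt.
      by rewrite sA' cA.
    by apply: G3.
have Hd' : forall t, 0 < t <= k -> ~~ (predU gd (pred1 t0)) t -> sumd + k + d t <= #|Nb (cen t)|.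
  move=> t rt; rewrite !inE negb_or => /andP [ng _]; exact: Hdeg.
have Hc' : count (predC (predU gd (pred1 t0))) (iota 1 k) <= m.
  rewrite -ltnS; apply: leq_trans cnt; apply: (count_lt (x := t0)) => //.
    by move=> y; rewrite !inE negb_or => /andP [].
  by rewrite !inE eqxx orbT.
exact: IH _ _ Hc' Hd' HG.
Qed.


Definition cliq (S : {set 'I_n}) := [forall x in S, forall y in S, (x != y) ==> g (x, y)].

Lemma cliqP S x y : cliq S -> x \in S -> y \in S -> x != y -> g (x, y).
Proof. by move=> /forall_inP /(_ x) h xS yS; move: (h xS) => /forall_inP /(_ y yS) /implyP; apply. Qed.

Lemma numKrE r : num_Kr g r = #|[set S : {set 'I_n} | (#|S| == r) && cliq S]|.
Proof. by []. Qed.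

Section Count.
Variables (L X : {set 'I_n}) (D M r : nat).
Let W := ~: (L :|: X).
Hypothesis degX : forall x, x \in X -> #|Nb x| < M.
Hypothesis degW : forall w, w \in W -> #|Nb w :&: W| < D.

Let Cl := [set S : {set 'I_n} | (#|S| == r) && cliq S].
Let Cl3 := [set S in Cl | [disjoint S & X] && ~~ (S \subset L)].
Let Cl3q q := [set S in Cl3 | #|S :&: W| == q].

Lemma WLdisj : [disjoint W & L].
Proof. by rewrite disjoints_subset /W setCS subsetUl. Qed.

Lemma S3sub S : S \in Cl3 -> S :\: L = S :&: W.
Proof.
rewrite !inE => /andP [_ /andP [dX _]]; apply/setP => x; rewrite !inE negb_or.
case: (boolP (x \in S)) => xS; rewrite ?andbF ?andbT //.
by rewrite (disjointFr dX xS) andbT.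
Qed.

Lemma S3card S : S \in Cl3 -> #|S :&: L| + #|S :&: W| = r.
Proof.
move=> h; rewrite -(S3sub h) cardsID.
by move: h; rewrite !inE => /andP [/andP [/eqP -> _] _].
Qed.

Lemma perw q w : w \in W -> 0 < q ->
  #|[set S in Cl3q q | w \in S]| <= 'C(#|L|, r - q) * 'C(D.-1, q.-1).
Proof.
move=> wW q0.
pose phi (S : {set 'I_n}) := (S :&: L, (S :&: W) :\ w).
pose T1 := [set A : {set 'I_n} | A \subset L & #|A| == r - q].
pose T2 := [set B : {set 'I_n} | B \subset Nb w :&: W & #|B| == q.-1].
have memq S : S \in [set S in Cl3q q | w \in S] = [&& S \in Cl3, #|S :&: W| == q & w \in S].
  by rewrite in_set /Cl3q in_set -andbA.
have inj : {in [set S in Cl3q q | w \in S] &, injective phi}.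
  move=> S1 S2; rewrite !memq => /and3P [h1 _ w1] /and3P [h2 _ w2] [e1 e2].
  have dec S : S \in Cl3 -> w \in S -> S = (S :&: L) :|: (w |: ((S :&: W) :\ w)).
    move=> h wS; rewrite setD1K; last by rewrite inE wS wW.
    by rewrite -(S3sub h) setID.
  by rewrite (dec _ h1 w1) (dec _ h2 w2) e1 e2.
rewrite -(card_in_imset inj).
apply: leq_trans (subset_leq_card (_ : _ \subset setX T1 T2)) _.
  apply/subsetP => p /imsetP [S]; rewrite memq => /and3P [h /eqP qS wS] ->.
  have h' := h; move: h'; rewrite inE => /andP [hCl _]; move: hCl; rewrite inE => /andP [_ c].
  rewrite !inE subsetIr /=; move: (S3card h); rewrite qS => e.
  have -> : #|S :&: L| = r - q by rewrite -e addnK.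
  rewrite eqxx /=; apply/andP; split.
    apply/subsetP => y; rewrite !inE => /andP [ne /andP [yS yW]]; rewrite yW andbT.
    by apply: (cliqP c wS yS); rewrite eq_sym.
  by move: qS; rewrite (cardsD1 w (S :&: W)) in_setI wS wW => <-.
rewrite cardsX /T1 /T2 !cards_draws leq_mul2l; apply/orP; right.
apply: leq_bin2l; have := degW wW; by case: D.
Qed.

Lemma perq q : 0 < q -> 
  D * #|Cl3q q| <= #|W| * ('C(#|L|, r - q) * 'C(D, q)).
Proof.
move=> q0.
have e : q * #|Cl3q q| = \sum_(w in W) #|[set S in Cl3q q | w \in S]|.
  rewrite mulnC -sum_nat_const.
  transitivity (\sum_(S in Cl3q q) \sum_(w in W) ((w \in S) : nat)).
    apply: eq_bigr => S; rewrite [S \in _]inE => /andP [_ /eqP <-].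
    rewrite sum_ind; apply: eq_card => x; rewrite in_setI in_set andbC.
    by rewrite !inE andbC.
  by rewrite exchange_big; apply: eq_bigr => w _; rewrite sum_ind.
have : q * (D * #|Cl3q q|) <= q * (#|W| * ('C(#|L|, r - q) * 'C(D, q))).
  rewrite mulnCA e big_distrr /=.
  apply: (@leq_trans (\sum_(w in W) D * ('C(#|L|, r - q) * 'C(D.-1, q.-1)))).
    by apply: leq_sum => w wW; apply: leq_mul => //; exact: perw.
  rewrite sum_nat_const.
  have md := mul_bin_diag D q.-1; rewrite prednK // in md.
  apply: eq_leq; rewrite [D * (_ * _)]mulnCA md; ring.
by rewrite leq_pmul2l.
Qed.

Lemma cl3_bound : D * #|Cl3| <= #|W| * ('C(D + #|L|, r) - 'C(#|L|, r)).
Proof.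
have sub : Cl3 \subset \bigcup_(q < r.+1) Cl3q q.
  apply/subsetP => S h; apply/bigcupP.
  have le : #|S :&: W| < r.+1 by rewrite ltnS -(S3card h) leq_addl.
  exists (Ordinal le) => //; rewrite /Cl3q inE h /=.
  by [].
have c0 : Cl3q 0 = set0.
  apply/setP => S; rewrite in_set0 /Cl3q in_set; apply/negP => /andP [h /eqP e].
  move/cards0_eq: e => e; have := S3sub h; rewrite e => /eqP; rewrite setD_eq0.
  by move: h; rewrite inE => /andP [_ /andP [_ /negbTE ->]].
have := leq_trans (subset_leq_card sub) (card_bigcup_le _ _ _) => cle.
apply: leq_trans (leq_mul (leqnn D) cle) _.
rewrite big_ord_recl /= c0 cards0 add0n big_distrr /=.
apply: (@leq_trans (\sum_(q < r) #|W| * ('C(#|L|, r - q.+1) * 'C(D, q.+1)))).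
  by apply: leq_sum => q _; apply: perq.
rewrite -big_distrr /= leq_mul2l; apply/orP; right.
have V := binomial.Vandermonde D #|L| r; rewrite big_ord_recl bin0 mul1n subn0 in V.
rewrite -V addKn; apply: eq_leq; apply: eq_bigr => q _; by rewrite mulnC.
Qed.

Lemma count_main : num_Kr g r <= 'C(#|L|, r) + #|X| * 'C(M, r) + #|Cl3|.
Proof.
pose Cl1 := [set S : {set 'I_n} | S \subset L & #|S| == r].
pose Cl2 := \bigcup_(x in X) [set S : {set 'I_n} | S \subset x |: Nb x & #|S| == r].
have sub : Cl \subset Cl1 :|: Cl2 :|: Cl3.
  apply/subsetP => S h; have h' := h; move: h'; rewrite inE => /andP [/eqP cS c].
  case: (boolP [disjoint S & X]) => dX.
    case: (boolP (S \subset L)) => sL.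
      by rewrite !inE sL cS eqxx.
    by rewrite [S \in _ :|: Cl3]inE [S \in Cl3]inE h dX sL orbT.
  rewrite -setI_eq0 in dX; case/set0Pn: dX => x; rewrite inE => /andP [xS xX].
  rewrite [S \in _ :|: Cl3]inE [S \in _ :|: Cl2]inE; apply/orP; left; apply/orP; right.
  apply/bigcupP; exists x => //; rewrite inE cS eqxx andbT; apply/subsetP => y yS.
  rewrite !inE; case: (eqVneq y x) => //= ne; apply: (cliqP c xS yS); by rewrite eq_sym.
rewrite numKrE; apply: leq_trans (subset_leq_card sub) _.
apply: leq_trans (leq_card_setU _ _).1 _; rewrite leq_add2r.
apply: leq_trans (leq_card_setU _ _).1 _; apply: leq_add.
  by rewrite cards_draws.
apply: leq_trans (card_bigcup_le _ _ _) _.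
rewrite -sum_nat_const; apply: leq_sum => x xX; rewrite cards_draws; apply: leq_bin2l.
rewrite cardsU1; have := degX xX; case: (x \in Nb x) => /= h; [rewrite add0n; exact: ltnW | by rewrite add1n].
Qed.

Lemma count_ex : exists c3, num_Kr g r <= 'C(#|L|, r) + #|X| * 'C(M, r) + c3 /\
   D * c3 <= #|W| * ('C(D + #|L|, r) - 'C(#|L|, r)).
Proof. by exists #|Cl3|; split; [exact: count_main | exact: cl3_bound]. Qed.

End Count.


Lemma embed_good cen lv :
  (forall t t', 0 < t <= k -> 0 < t' <= k -> cen t = cen t' -> t = t') ->
  Good predT cen lv -> contains_copy g (@star_forest k d).
Proof.
move=> Hc [G1 [G2 G3]]; apply: (embed (cen := cen) (lv := lv)) => //.
- by move=> t t' rt rt'; apply: G1.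
- by move=> t t' rt rt'; apply: G2.
- by move=> t rt; apply: G3.
Qed.

Definition Mb := sumd + k + sumd.
Definition Lb := [set v | Mb <= #|Nb v|].

Definition SF j (c : nat -> 'I_n) (lv : nat -> {set 'I_n}) : Prop :=
 (forall t, #|Lb| < t < j -> c t \notin Lb /\ lv t \subset Nb (c t) :\: Lb /\ #|lv t| = d t) /\
 (forall t t', #|Lb| < t < j -> #|Lb| < t' < j -> c t = c t' -> t = t') /\
 (forall t t', #|Lb| < t < j -> #|Lb| < t' < j -> c t \notin lv t') /\
 (forall t t', #|Lb| < t < j -> #|Lb| < t' < j -> t != t' -> [disjoint lv t & lv t']).

Hypothesis Ffree : ~~ contains_copy g (@star_forest k d).

Lemma SF_full c lv : ~ SF k.+1 c lv.
Proof.
move=> [S1 [S2 [S3 S4]]].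
pose s := #|Lb|.
pose cen t := if t <= s then nth (c t) (enum Lb) t.-1 else c t.
have cenL t : 0 < t <= s -> cen t \in Lb.
  case/andP=> t0 ts; rewrite /cen ts -mem_enum; apply: mem_nth.
  by rewrite -cardE; case: t t0 ts.
have cenc t : s < t -> cen t = c t by move=> st; rewrite /cen leqNgt st.
have inj t t' : 0 < t <= k -> 0 < t' <= k -> cen t = cen t' -> t = t'.
  move=> /andP [t0 tk] /andP [t0' tk'].
  case: (leqP t s) => ts; case: (leqP t' s) => ts'.
  - have hi : t.-1 < size (enum Lb) by rewrite -cardE; case: t t0 ts {tk}.
    have hi' : t'.-1 < size (enum Lb) by rewrite -cardE; case: t' t0' ts' {tk'}.
    rewrite /cen ts ts' (set_nth_default (c t) _ hi') => /eqP.
    rewrite nth_uniq ?enum_uniq // => /eqP.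
    by case: t t0 {ts tk hi}; case: t' t0' {ts' tk' hi'} => // ? ? ? ? /= ->.
  - move=> e; have := cenL t; rewrite t0 ts e cenc // => /(_ isT) h.
    by have := S1 t'; rewrite ts' ltnS tk' => /(_ isT) [nL _]; rewrite h in nL.
  - move=> e; have := cenL t'; rewrite t0' ts' -e cenc // => /(_ isT) h.
    by have := S1 t; rewrite ts ltnS tk => /(_ isT) [nL _]; rewrite h in nL.
  - by rewrite !cenc //; apply: S2; rewrite ?ts ?ts' ltnS.
have HG : Good (fun t => s < t) cen lv.
  split; [|split].
  - move=> t t' /andP [t0 tk] /andP [t0' tk'] st'.
    have := S1 t'; rewrite st' ltnS tk' => /(_ isT) [_ [sub _]].
    case: (leqP t s) => ts.
      apply/negP => /(subsetP sub); rewrite inE => /andP [].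
      by rewrite cenL ?t0.
    by rewrite cenc //; apply: S3; rewrite ?ts ?st' ltnS.
  - by move=> t t' /andP [_ tk] /andP [_ tk'] st st'; apply: S4; rewrite ?st ?st' ltnS.
  - move=> t /andP [_ tk] st; have := S1 t; rewrite st ltnS tk => /(_ isT) [_ [sub e]].
    by rewrite cenc // e; split => //; apply: subset_trans sub (subsetDl _ _).
have Hdeg : forall t, 0 < t <= k -> ~~ (s < t) -> sumd + k + d t <= #|Nb (cen t)|.
  move=> t /andP [t0 tk]; rewrite -leqNgt => ts.
  have := cenL t; rewrite t0 ts inE => /(_ isT).
  apply: leq_trans; rewrite /Mb leq_add2l; apply: d_le_sumd; by rewrite t0.
have [lv' G'] := fill inj Hdeg HG.
by move: Ffree; rewrite (embed_good inj G').
Qed.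


Definition Xs j (c : nat -> 'I_n) (lv : nat -> {set 'I_n}) :=
  \bigcup_(t <- index_iota #|Lb|.+1 j) (c t |: lv t).

Lemma inXc j (c : nat -> 'I_n) (lv : nat -> {set 'I_n}) t : #|Lb| < t < j -> c t \in Xs j c lv.
Proof. by move=> rt; apply: (mem_bigcup_seq (i := t)); rewrite ?mem_index_iota ?setU11. Qed.

Lemma inXl j (c : nat -> 'I_n) (lv : nat -> {set 'I_n}) t : #|Lb| < t < j -> lv t \subset Xs j c lv.
Proof.
move=> rt; apply/subsetP => x xl; apply: (mem_bigcup_seq (i := t)).
  by rewrite mem_index_iota. by []. by rewrite inE xl orbT.
Qed.

Lemma SF_ext j (c : nat -> 'I_n) (lv : nat -> {set 'I_n}) w (A : {set 'I_n}) : SF j c lv -> w \notin Lb -> w \notin Xs j c lv ->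
  A \subset Nb w :\: (Lb :|: Xs j c lv) -> #|A| = d j ->
  SF j.+1 (fun t => if t == j then w else c t) (fun t => if t == j then A else lv t).
Proof.
move=> [S1 [S2 [S3 S4]]] wL wX sA cA.
have spl t : #|Lb| < t < j.+1 -> t = j \/ #|Lb| < t < j.
  by case/andP => a; rewrite ltnS leq_eqVlt => /orP [/eqP ->|b]; [left|right; rewrite a b].
have AX x : x \in A -> x \notin Xs j c lv /\ x \notin Lb /\ x \in Nb w.
  by move/(subsetP sA); rewrite !inE negb_or => /andP [/andP [-> ->] ->].
have wA : w \notin A by apply/negP => /AX [_ [_]]; rewrite inE g_irr.
have jne t : #|Lb| < t < j -> (t == j) = false.
  by move=> /andP [_ tj]; apply/negbTE; rewrite neq_ltn tj.
split; [|split; [|split]].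
- move=> t /spl [->|rt]; rewrite ?eqxx ?jne //.
    split => //; split => //; apply/subsetP => x xA; have [_ [xL xN]] := AX x xA.
    by rewrite inE xL.
  exact: S1.
- move=> t t' /spl [->|rt] /spl [->|rt']; rewrite ?eqxx ?jne //.
  + by move=> e; move: wX; rewrite e inXc.
  + by move=> e; move: wX; rewrite -e inXc.
  + exact: S2.
- move=> t t' /spl [->|rt] /spl [->|rt']; rewrite ?eqxx ?jne //.
  + by apply/negP => /(subsetP (inXl c lv rt')) h; rewrite h in wX.
  + by apply/negP => /AX [h _]; rewrite inXc in h.
  + exact: S3.
- move=> t t' /spl [->|rt] /spl [->|rt']; rewrite ?eqxx ?jne //.
  + move=> _; rewrite disjoint_subset; apply/subsetP => x /AX [h _].
    by rewrite inE; apply: contra h => /(subsetP (inXl c lv rt')).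
  + move=> _; rewrite disjoint_sym disjoint_subset; apply/subsetP => x /AX [h _].
    by rewrite inE; apply: contra h => /(subsetP (inXl c lv rt)).
  + exact: S4.
Qed.


Lemma bigcup_seqP (I : eqType) (r : seq I) (F : I -> {set 'I_n}) x :
  x \in \bigcup_(i <- r) F i -> exists2 i, i \in r & x \in F i.
Proof.
elim: r => [|a r IH]; first by rewrite big_nil inE.
rewrite big_cons inE => /orP [h|/IH [i ir h]]; first by exists a; rewrite ?inE ?eqxx.
by exists i; rewrite // inE ir orbT.
Qed.

Lemma graph_bound r (x0 : 'I_n) :
  exists j, #|Lb| < j <= k /\ exists Xc, Xc <= sumd + k /\ (j = #|Lb|.+1 -> Xc = 0) /\
  exists c3, num_Kr g r <= 'C(#|Lb|, r) + Xc * 'C(Mb, r) + c3 /\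
    d j * c3 <= (n - #|Lb|) * ('C(d j + #|Lb|, r) - 'C(#|Lb|, r)).
Proof.
pose s := #|Lb|.
pose P j := exists c lv, SF j c lv.
have triv j : j <= s.+1 -> P j.
  move=> js; exists (fun _ => x0), (fun _ => set0).
  have F t : s < t < j -> False by case/andP => a b; move: (leq_trans b js); rewrite ltnS leqNgt a.
  split; [|split; [|split]] => t; first by move/F.
  - by move=> t' /F.
  - by move=> t' /F.
  - by move=> t' /F.
have sk : s < k.
  rewrite ltnNge; apply/negP => ks.
  have [c [lv h]] := triv k.+1 ks.
  exact: SF_full h.
have nPk : ~ P k.+1 by case=> c [lv h]; exact: SF_full h.
have [j [/andP [sj jk] [[c [lv Hj]] nP]]] := maxP (triv _ (leqnn _)) nPk (sk : s.+1 < k.+1).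
rewrite ltnS in jk.
pose X := Xs j c lv.
pose W := ~: (Lb :|: X).
have [S1 [S2 [S3 S4]]] := Hj.
have degX x : x \in X -> #|Nb x| < Mb.
  case/bigcup_seqP => t; rewrite mem_index_iota => rt xin.
  have [cL [sub _]] := S1 t rt.
  have xL : x \notin Lb.
    move: xin; rewrite in_setU1 => /orP [/eqP -> //|/(subsetP sub)].
    by rewrite in_setD => /andP [].
  by move: xL; rewrite inE -ltnNge.
have degW w : w \in W -> #|Nb w :&: W| < d j.
  move=> wW; rewrite ltnNge; apply/negP => big.
  have [A sA cA] := exists_sub big.
  have wL : w \notin Lb by move: wW; rewrite inE inE negb_or => /andP [].
  have wX : w \notin X by move: wW; rewrite inE inE negb_or => /andP [].
  apply: nP; exists (fun t => if t == j then w else c t), (fun t => if t == j then A else lv t).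
  apply: SF_ext => //; apply: subset_trans sA _; rewrite setDE; apply/subsetP => y.
  by rewrite !inE.
have [c3 [h1 h2]] := count_ex r degX degW.
exists j; rewrite sj jk; split => //; exists #|X|; split; [|split].
- apply: leq_trans (card_bigcup_le _ _ _) _.
  apply: (@leq_trans (\sum_(s.+1 <= t < j) (d t + 1))).
    rewrite big_seq_cond [X in _ <= X]big_seq_cond; apply: leq_sum => t /andP [rt _].
    rewrite mem_index_iota in rt; have [_ [_ e]] := S1 t rt.
    by rewrite cardsU1 e addnC leq_add2l; case: (c t \in lv t).
  apply: (@leq_trans (\sum_(1 <= t < k.+1) (d t + 1))).
    by apply: sum_sub => //; apply: leq_trans jk _.
  by rewrite big_split /= sum_nat_const_nat subSS subn0 muln1.
- by move=> ej; rewrite /X /Xs ej /index_iota subnn big_nil cards0.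
- exists c3; split => //; apply: leq_trans h2 _; rewrite addnC leq_mul2r; apply/orP; right.
  rewrite -[n in n - _](card_ord n) -(cardsC Lb) addKn; apply: subset_leq_card; by rewrite /W setCU subsetIl.
Qed.

End Graph.

Local Open Scope ring_scope.

Lemma bigmax_ge_seq (F : nat -> rat) (s : seq nat) i : i \in s ->
  F i <= \big[Num.max/0]_(j <- s) F j.
Proof.
elim: s => // a s IH; rewrite inE big_cons => /orP [/eqP ->|h]; rewrite le_max ?lexx //.
by rewrite IH ?orbT.
Qed.

Lemma bigmax_ge (F : nat -> rat) m1 m2 i : (m1 <= i < m2)%N ->
  F i <= \big[Num.max/0]_(m1 <= j < m2) F j.
Proof. by move=> h; apply: bigmax_ge_seq; rewrite mem_index_iota. Qed.

Lemma bigmax_ge0 (F : nat -> rat) m1 m2 : 0 <= \big[Num.max/0]_(m1 <= j < m2) F j.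
Proof.
elim: (index_iota m1 m2) => [|a s IH]; first by rewrite big_nil.
by rewrite big_cons le_max IH orbT.
Qed.

Lemma ceil_bound (x D a c3 : nat) : (0 < D)%N -> (D * c3 <= x * a)%N ->
  (c3%:R : rat) <= a%:R * (Num.ceil (x%:R / D%:R : rat))%:~R.
Proof.
move=> D0 h.
have D0' : (0 : rat) < D%:R by rewrite ltr0n.
apply: (@le_trans _ _ (a%:R * (x%:R / D%:R))); last first.
  by apply: ler_wpM2l; [rewrite ler0n | exact: Num.Theory.ceil_ge].
rewrite mulrA ler_pdivlMr // -!natrM ler_nat mulnC (mulnC a).
exact: h.
Qed.

Lemma a_succ D y r : ('C(D + y.+1, r) - 'C(y.+1, r) =
  ('C(D + y, r) - 'C(y, r)) + ('C(D + y, r.-1) - 'C(y, r.-1)) * (0 < r))%N.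
Proof.
case: r => [|r]; first by rewrite !bin0.
rewrite addnS !binS /= muln1.
have h1 := leq_bin2l r.+1 (leq_addl D y).
have h2 := leq_bin2l r (leq_addl D y).
lia.
Qed.

Lemma a_mono D x y r : (x <= y)%N ->
  ('C(D + x, r) - 'C(x, r) <= 'C(D + y, r) - 'C(y, r))%N.
Proof.
move=> xy; elim: y xy => [|y IH]; first by rewrite leqn0 => /eqP ->.
rewrite leq_eqVlt => /orP [/eqP ->//|]; rewrite ltnS => /IH h.
by apply: leq_trans h _; rewrite a_succ leq_addr.
Qed.

Lemma a_step D x r : (0 < D)%N -> (1 < r)%N -> (0 < 'C(D + x, r) - 'C(x, r))%N ->
  (('C(D + x, r) - 'C(x, r)).+1 <= 'C(D + x.+1, r) - 'C(x.+1, r))%N.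
Proof.
move=> D0 r1 pos; rewrite a_succ.
case: r r1 pos => [|[|r]] // _ pos /=; rewrite muln1.
have hr : (r.+2 <= D + x)%N.
  rewrite -bin_gt0; move: pos; rewrite subn_gt0; exact: leq_ltn_trans (leq0n _).
suff : ('C(x, r.+1) < 'C(D + x, r.+1))%N by lia.
case: (ltnP x r.+1) => xr.
  by rewrite bin_small // bin_gt0; apply: leq_trans (leqnSn _) hr.
apply: (@leq_trans 'C(x.+1, r.+1)); last by apply: leq_bin2l; rewrite addnC -addn1 leq_add2l.
by rewrite binS -addn1 leq_add2l bin_gt0 ltnW.
Qed.

Lemma numKr_le n (g : {ffun 'I_n * 'I_n -> bool}) r : (num_Kr g r <= 'C(n, r))%N.
Proof.
rewrite /num_Kr -[n in 'C(n, _)]card_ord -card_draws; apply: subset_leq_card.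
by apply/subsetP => S; rewrite !inE => /andP [-> _].
Qed.

Unset Implicit Arguments.

Theorem corollary6p2 (k : nat) (d : nat -> nat) (r : nat) :
  (2 <= k)%N ->
  (forall i, (1 <= i < k)%N -> (d i.+1 <= d i)%N) ->
  (2 <= d k)%N ->
  (r <= d 1%N + k - 2)%N ->
  exists N : nat, forall n : nat, (N <= n)%N ->
    ((ex_Kr n r (@star_forest k d))%:R : rat) <=
    Num.max
      (\big[Num.max/0]_(1 <= i < k.+1)
         Num.max
           ((('C(d i + i - 1, r))%:R - ('C(i - 1, r))%:R)
              * (Num.ceil ((n%:R - i%:R + 1) / (d i)%:R : rat))%:~R
            + ('C(i - 1, r))%:R)
           (((d i)%:R - 1) / (r%:R - i%:R + 1) * (n%:R - i%:R + 1)))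
      (\big[Num.max/0]_(1 <= c < k.-1)
         ((maxn 'C(d c + c, r.-1) (d c + c))%:R / (r%:R - c%:R)
            * (n%:R - c%:R))).
Proof.
move=> hk hdec hdk hr.
have dle1 : forall t, (0 < t <= k)%N -> (d t <= d 1)%N.
  elim=> [//|t IH] /andP [_ tk]; case: (posnP t) => [-> //|t0].
  apply: leq_trans (hdec t _) (IH _); first by rewrite t0.
  by rewrite t0 ltnW.
have dgek : forall t, (0 < t <= k)%N -> (d k <= d t)%N.
  move=> t /andP [t0 tk]; move e: (k - t)%N => m.
  elim: m t t0 tk e => [|m IH] t t0 tk e.
    by have -> : t = k by lia.
  have tk' : (t < k)%N by lia.
  apply: leq_trans (IH t.+1 _ tk' _) (hdec t _) => //; first by lia.
  by rewrite t0.
have d12 : (2 <= d 1)%N by apply: leq_trans hdk (dgek 1%N _); rewrite /= ltnW.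
have dpos t : (0 < t <= k)%N -> (0 < d t)%N.
  by move=> rt; apply: leq_trans (dgek _ rt); apply: leq_trans hdk.
set d1 := d 1%N.
pose K0 := ('C(k, r) + (sumd k d + k) * 'C(Mb k d, r))%N.
exists (r * K0 + d1 * K0 + 'C(k + d1, r) * k + k + 1)%N => n hn.
have n0 : (0 < n)%N by apply: leq_trans hn; rewrite addn1.
set RHS := Num.max _ _.
have RHS0 : 0 <= RHS by rewrite le_max bigmax_ge0.
have Ai i : (1 <= i <= k)%N ->
  (('C(d i + i - 1, r))%:R - ('C(i - 1, r))%:R) * (Num.ceil ((n%:R - i%:R + 1) / (d i)%:R : rat))%:~R
   + ('C(i - 1, r))%:R <= RHS.
  move=> ri; rewrite le_max; apply/orP; left.
  apply: le_trans _ (bigmax_ge _ (_ : (1 <= i < k.+1)%N)); first by rewrite le_max lexx.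
  by rewrite ltnS.
have B1 : ((d 1)%:R - 1) / (r%:R - 1%:R + 1) * (n%:R - 1%:R + 1) <= RHS.
  rewrite le_max; apply/orP; left.
  apply: le_trans _ (bigmax_ge _ (_ : (1 <= 1 < k.+1)%N)); first by rewrite le_max lexx orbT.
  by rewrite /= ltnS (ltnW hk).
suff H : forall g : {ffun 'I_n * 'I_n -> bool}, simple_graph g -> ~~ contains_copy g (@star_forest k d) ->
    (num_Kr g r)%:R <= RHS.
  rewrite /ex_Kr; apply: (big_ind (fun m : nat => (m%:R : rat) <= RHS)) => //.
  - by move=> a b ha hb; rewrite /maxn; case: ifP.
  - by move=> g /andP [gs Ff]; apply: H.
move=> g gs Ff.
have x0 : 'I_n := Ordinal n0.
have [j [/andP [sj jk] [Xc [Xcb [Xc0 [c3 [h1 h2]]]]]]] := graph_bound gs Ff r x0.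
move: sj Xc0 h1 h2; set s := #|Lb g k d| => sj Xc0 h1 h2.
have sn : (s <= n)%N by rewrite /s -[n in (_ <= n)%N](card_ord n) max_card.
have sk : (s < k)%N by apply: leq_trans sj jk.
case: (leqP r 1) => [r1|r2].
  apply: (@le_trans _ _ ('C(n, r))%:R); first by rewrite ler_nat numKr_le.
  apply: le_trans (Ai 1%N _); last by rewrite /= (ltnW hk).
  rewrite addnK subnn.
  case: r r1 {hr h1 h2 Ai B1 RHS RHS0 K0 hn} => [|[|//]] _.
    by rewrite !bin0 subrr mul0r add0r.
  rewrite !bin1 subr0 addr0 subrK.
  by apply: ceil_bound; [exact: ltnW d12 | rewrite mulnC].
have rj : (0 < j <= k)%N by rewrite jk andbT (leq_ltn_trans (leq0n s) sj).
have D0 := dpos j rj.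
have Dle := dle1 j rj.
have hA := Ai j rj.
have ej1 : (d j + j - 1 = d j + j.-1)%N by lia.
have jn : (j.-1 <= n)%N by apply: leq_trans (leq_pred j) (leq_trans jk _); lia.
have en : (n%:R - j%:R + 1 : rat) = (n - j.-1)%N%:R.
  have -> : (j%:R : rat) = (j.-1)%:R + 1 by rewrite natr1 prednK //; case/andP: rj.
  by rewrite natrB //; ring.
rewrite ej1 subn1 en -natrB ?leq_bin2l ?leq_addl // in hA.
move: (d j) D0 Dle hA h2 => D D0 Dle hA h2.
have hK : ('C(s, r) + Xc * 'C(Mb k d, r) <= K0)%N.
  by apply: leq_add; [apply: leq_bin2l; apply: ltnW | apply: leq_mul].
have [ej|nej] := eqVneq j s.+1.
  rewrite Xc0 // mul0n addn0 in h1; rewrite ej /= in hA.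
  apply: le_trans hA; apply: (@le_trans _ _ ('C(s, r) + c3)%N%:R); first by rewrite ler_nat.
  by rewrite natrD addrC lerD2r; apply: ceil_bound.
have sj' : (s.+1 < j)%N by rewrite ltn_neqAle eq_sym nej sj.
pose a := ('C(D + s, r) - 'C(s, r))%N.
have h1' : (num_Kr g r <= K0 + c3)%N by apply: leq_trans h1 _; rewrite leq_add2r.
case: (posnP a) => [a0|apos].
  have c30 : c3 = 0%N.
    by move: h2; rewrite -/a a0 muln0 leqn0 muln_eq0 => /orP [/eqP D00|/eqP //]; rewrite D00 in D0.
  rewrite c30 addn0 in h1'.
  apply: le_trans B1; rewrite !subrK.
  apply: (@le_trans _ _ (K0%:R)); first by rewrite ler_nat.
  have r0 : (0 : rat) < r%:R by rewrite ltr0n; apply: leq_trans r2.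
  rewrite mulrAC ler_pdivlMr // -[X in X <= _]mulr1 -natrM.
  apply: (@le_trans _ _ (n%:R * 1)).
    by rewrite !mulr1 ler_nat mulnC; apply: leq_trans hn; rewrite -!addnA leq_addr.
  rewrite mulrC ler_wpM2r ?ler0n //; have : (2%:R : rat) <= (d 1)%:R by rewrite ler_nat.
  lra.
pose a' := ('C(D + j.-1, r) - 'C(j.-1, r))%N.
have ha : (a.+1 <= a')%N.
  apply: leq_trans (@a_step D s r D0 r2 apos) (@a_mono D s.+1 j.-1 r _); lia.
have aC : (a <= 'C(k + d1, r))%N.
  apply: leq_trans (leq_subr _ _) _; apply: leq_bin2l; rewrite addnC; apply: leq_add => //.
  exact: ltnW.
have main : (D * (K0 + c3) <= (n - j.-1) * a')%N.
  have nsy : (n - s = (n - j.-1) + (j.-1 - s))%N by lia.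
  rewrite mulnDr; apply: leq_trans (leq_add (leqnn _) h2) _.
  rewrite -/a nsy mulnDl.
  apply: leq_trans _ (leq_mul (leqnn _) ha); rewrite mulnS.
  have f1 : (D * K0 <= d1 * K0)%N by rewrite leq_mul2r Dle orbT.
  have f2 : ((j.-1 - s) * a <= k * 'C(k + d1, r))%N by apply: leq_mul => //; lia.
  have f3 : (r * K0 + d1 * K0 + 'C(k + d1, r) * k + k + 1 <= n)%N := hn.
  move: f1 f2 f3; rewrite [('C(k + d1, r) * k)%N]mulnC.
  move: (D * K0)%N (d1 * K0)%N ((j.-1 - s) * a)%N (k * 'C(k + d1, r))%N ((n - j.-1) * a)%N (r * K0)%N => p1 p2 p3 p4 p5 p6.
  lia.
apply: le_trans hA; apply: (@le_trans _ _ (K0 + c3)%N%:R); first by rewrite ler_nat.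
apply: (@le_trans _ _ (('C(D + j.-1, r) - 'C(j.-1, r))%N%:R * (Num.ceil ((n - j.-1)%N%:R / D%:R : rat))%:~R)); last by rewrite lerDl ler0n.
exact: ceil_bound.
Qed.
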